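(* Let $k \geq 0$ be an integer. (i) If $k \leq 6$, then $K_{m,m+k}$ is stable for all integers $m \geq 1$. (ii) If $k \geq 7$, then there exists an integer $N(k)$ such that $K_{m,m+k}$ is stable for all integers $m > N(k)$.
   Context: For a simple graph $G$, the independence polynomial is $i(G,x)=\sum_{k=0}^{\alpha(G)} i_k(G)x^k$, where $i_k(G)$ is the number of independent sets of size $k$ in $G$ (with $i_0(G)=1$) and $\alpha(G)$ is the independence number. A graph $G$ is called stable if every root $z$ of $i(G,x)$ satisfies $\mathrm{Re}(z)\leq 0$. $K_{a,b}$ denotes the complete bipartite graph with parts of sizes $a$ and $b$; its independence polynomial is $(1+x)^a+(1+x)^b-1$. *)

(* Defs.v *)
From mathcomp Require Import all_boot all_order all_algebra algC.
Set Implicit Arguments. Unset Strict Implicit. Unset Printing Implicit Defensive.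
Import Order.TTheory GRing.Theory Num.Theory.
Local Open Scope ring_scope.

(* A simple graph: vertex set T (finite), edge relation e (intended symmetric
   and irreflexive). *)

Definition independent (T : finType) (e : rel T) (S : {set T}) : bool :=
  [forall x in S, forall y in S, ~~ e x y].

Definition indep_count (T : finType) (e : rel T) (k : nat) : nat :=
  #|[set S : {set T} | independent e S & #|S| == k]|.

(* i(G,x) = sum_k i_k(G) x^k, as a polynomial over the complex
   (algebraic) numbers.  Summing up to #|T| is harmless: i_k = 0 beyond alpha(G). *)
Definition indep_poly (T : finType) (e : rel T) : {poly algC} :=
  \sum_(k < #|T|.+1) (indep_count e k)%:R *: 'X^k.

Definition stable (T : finType) (e : rel T) : Prop :=
  forall z : algC, root (indep_poly e) z -> 'Re z <= 0.

Definition Kab_rel (a b : nat) : rel ('I_a + 'I_b)%type :=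
  fun x y => match x, y with
             | inl _, inr _ | inr _, inl _ => true
             | _, _ => false
             end.
Arguments Kab_rel a b : clear implicits.

(* Main.v *)
Require Import Defs.
From mathcomp Require Import all_boot all_order all_algebra algC.
From mathcomp Require Import ring lra.
Set Implicit Arguments. Unset Strict Implicit. Unset Printing Implicit Defensive.
Import Order.TTheory GRing.Theory Num.Theory.
Local Open Scope ring_scope.


Fixpoint P (R : pzRingType) (k : nat) (t q : R) : R :=
  match k with 0 => 2 | 1 => t | (j.+1 as k1).+1 => t * P k1 t q - q * P j t q end.

Ltac pos_tac := lazymatch goal with
 | |- is_true (0 <= _ + _) => apply: addr_ge0; pos_tac
 | |- is_true (0 <= _ * _) => apply: mulr_ge0; pos_tac
 | |- is_true (0 <= _ ^+ _) => apply: exprn_ge0; pos_tac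
 | _ => first [assumption | apply: ler0n | apply: ler01]
 end.
Lemma lt_addpos (R : realFieldType) (x y : R) : 0 < x -> 0 <= y -> 0 < x + y.
Proof. move=> hx hy; exact: ltr_wpDr. Qed.
Ltac spos_tac := lazymatch goal with
 | |- is_true (0 < _ + _) => apply: lt_addpos; [spos_tac | pos_tac]
 | _ => by rewrite ltr0n
 end.
Lemma Gpos0 (R : realFieldType) (s w : R) : 0 <= s -> 0 <= w ->
  1 < ((1+s)^+2 + w) * (1 + P 0 (2*(1+s)) ((1+s)^+2 + w) + ((1+s)^+2 + w)^+0).
Proof.
move=> hs hw.
have hA : (0:R) < 3 + 4 * w^+1 by spos_tac.
have hB : (0:R) <= 8 by pos_tac.
have hC : (0:R) <= 4 by pos_tac.
have -> : ((1+s)^+2 + w) * (1 + P 0 (2*(1+s)) ((1+s)^+2 + w) + ((1+s)^+2 + w)^+0) =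
  1 + ((3 + 4 * w^+1) + s * (8) + s^+2 * (4)) by rewrite /=; ring.
rewrite ltrDl; apply: lt_addpos; first apply: lt_addpos => //.
  exact: mulr_ge0.
by apply: mulr_ge0 => //; apply: exprn_ge0.
Qed.

Lemma Gpos1 (R : realFieldType) (s w : R) : 0 <= s -> 0 <= w ->
  1 < ((1+s)^+2 + w) * (1 + P 1 (2*(1+s)) ((1+s)^+2 + w) + ((1+s)^+2 + w)^+1).
Proof.
move=> hs hw.
have hA : (0:R) < 3 + 5 * w^+1 + 1 * w^+2 by spos_tac.
have hB : (0:R) <= 12 + 6 * w^+1 by pos_tac.
have hC : (0:R) <= 13 + 2 * w^+1 + 6 * s^+1 + 1 * s^+2 by pos_tac.
have -> : ((1+s)^+2 + w) * (1 + P 1 (2*(1+s)) ((1+s)^+2 + w) + ((1+s)^+2 + w)^+1) =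
  1 + ((3 + 5 * w^+1 + 1 * w^+2) + s * (12 + 6 * w^+1) + s^+2 * (13 + 2 * w^+1 + 6 * s^+1 + 1 * s^+2)) by rewrite /=; ring.
rewrite ltrDl; apply: lt_addpos; first apply: lt_addpos => //.
  exact: mulr_ge0.
by apply: mulr_ge0 => //; apply: exprn_ge0.
Qed.

Lemma Gpos2 (R : realFieldType) (s w : R) : 0 <= s -> 0 <= w ->
  1 < ((1+s)^+2 + w) * (1 + P 2 (2*(1+s)) ((1+s)^+2 + w) + ((1+s)^+2 + w)^+2).
Proof.
move=> hs hw.
have hA : (0:R) < 3 + 4 * w^+1 + 1 * w^+2 + 1 * w^+3 by spos_tac.
have hB : (0:R) <= 16 + 12 * w^+1 + 6 * w^+2 by pos_tac.
have hC : (0:R) <= 28 + 18 * w^+1 + 3 * w^+2 + 28 * s^+1 + 12 * s^+1 * w^+1 + 17 * s^+2 + 3 * s^+2 * w^+1 + 6 * s^+3 + 1 * s^+4 by pos_tac.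
have -> : ((1+s)^+2 + w) * (1 + P 2 (2*(1+s)) ((1+s)^+2 + w) + ((1+s)^+2 + w)^+2) =
  1 + ((3 + 4 * w^+1 + 1 * w^+2 + 1 * w^+3) + s * (16 + 12 * w^+1 + 6 * w^+2) + s^+2 * (28 + 18 * w^+1 + 3 * w^+2 + 28 * s^+1 + 12 * s^+1 * w^+1 + 17 * s^+2 + 3 * s^+2 * w^+1 + 6 * s^+3 + 1 * s^+4)) by rewrite /=; ring.
rewrite ltrDl; apply: lt_addpos; first apply: lt_addpos => //.
  exact: mulr_ge0.
by apply: mulr_ge0 => //; apply: exprn_ge0.
Qed.

Lemma Gpos3 (R : realFieldType) (s w : R) : 0 <= s -> 0 <= w ->
  1 < ((1+s)^+2 + w) * (1 + P 3 (2*(1+s)) ((1+s)^+2 + w) + ((1+s)^+2 + w)^+3).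
Proof.
move=> hs hw.
have hA : (0:R) < 3 + 1 * w^+1 + 4 * w^+3 + 1 * w^+4 by spos_tac.
have hB : (0:R) <= 20 + 12 * w^+1 + 18 * w^+2 + 8 * w^+3 by pos_tac.
have hC : (0:R) <= 49 + 48 * w^+1 + 36 * w^+2 + 4 * w^+3 + 76 * s^+1 + 76 * s^+1 * w^+1 + 24 * s^+1 * w^+2 + 80 * s^+2 + 60 * s^+2 * w^+1 + 6 * s^+2 * w^+2 + 58 * s^+3 + 24 * s^+3 * w^+1 + 28 * s^+4 + 4 * s^+4 * w^+1 + 8 * s^+5 + 1 * s^+6 by pos_tac.
have -> : ((1+s)^+2 + w) * (1 + P 3 (2*(1+s)) ((1+s)^+2 + w) + ((1+s)^+2 + w)^+3) =
  1 + ((3 + 1 * w^+1 + 4 * w^+3 + 1 * w^+4) + s * (20 + 12 * w^+1 + 18 * w^+2 + 8 * w^+3) + s^+2 * (49 + 48 * w^+1 + 36 * w^+2 + 4 * w^+3 + 76 * s^+1 + 76 * s^+1 * w^+1 + 24 * s^+1 * w^+2 + 80 * s^+2 + 60 * s^+2 * w^+1 + 6 * s^+2 * w^+2 + 58 * s^+3 + 24 * s^+3 * w^+1 + 28 * s^+4 + 4 * s^+4 * w^+1 + 8 * s^+5 + 1 * s^+6)) by rewrite /=; ring.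
rewrite ltrDl; apply: lt_addpos; first apply: lt_addpos => //.
  exact: mulr_ge0.
by apply: mulr_ge0 => //; apply: exprn_ge0.
Qed.

Lemma Gpos4 (R : realFieldType) (s w : R) : 0 <= s -> 0 <= w ->
  1 < ((1+s)^+2 + w) * (1 + P 4 (2*(1+s)) ((1+s)^+2 + w) + ((1+s)^+2 + w)^+4).
Proof.
move=> hs hw.
have hw2 := exprn_ge0 2 hw; have hw3 := exprn_ge0 3 hw; have hw4 := exprn_ge0 4 hw; have hw5 := exprn_ge0 5 hw; have hw6 := exprn_ge0 6 hw; have hw7 := exprn_ge0 7 hw.
have hA : (0:R) < 3 + (-4) * w^+1 + 12 * w^+3 + 5 * w^+4 + 1 * w^+5 by have := (mulr_ge0 hw (sqr_ge0 (2*w-1))); have := (sqr_ge0 (24*w-7)); lra.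
have hB : (0:R) <= 24 + 40 * w^+2 + 40 * w^+3 + 10 * w^+4 by pos_tac.
have hC : (0:R) <= 76 + 80 * w^+1 + 140 * w^+2 + 60 * w^+3 + 5 * w^+4 + 160 * s^+1 + 240 * s^+1 * w^+1 + 200 * s^+1 * w^+2 + 40 * s^+1 * w^+3 + 240 * s^+2 + 340 * s^+2 * w^+1 + 150 * s^+2 * w^+2 + 10 * s^+2 * w^+3 + 264 * s^+3 + 280 * s^+3 * w^+1 + 60 * s^+3 * w^+2 + 212 * s^+4 + 140 * s^+4 * w^+1 + 10 * s^+4 * w^+2 + 120 * s^+5 + 40 * s^+5 * w^+1 + 45 * s^+6 + 5 * s^+6 * w^+1 + 10 * s^+7 + 1 * s^+8 by pos_tac.
have -> : ((1+s)^+2 + w) * (1 + P 4 (2*(1+s)) ((1+s)^+2 + w) + ((1+s)^+2 + w)^+4) =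
  1 + ((3 + (-4) * w^+1 + 12 * w^+3 + 5 * w^+4 + 1 * w^+5) + s * (24 + 40 * w^+2 + 40 * w^+3 + 10 * w^+4) + s^+2 * (76 + 80 * w^+1 + 140 * w^+2 + 60 * w^+3 + 5 * w^+4 + 160 * s^+1 + 240 * s^+1 * w^+1 + 200 * s^+1 * w^+2 + 40 * s^+1 * w^+3 + 240 * s^+2 + 340 * s^+2 * w^+1 + 150 * s^+2 * w^+2 + 10 * s^+2 * w^+3 + 264 * s^+3 + 280 * s^+3 * w^+1 + 60 * s^+3 * w^+2 + 212 * s^+4 + 140 * s^+4 * w^+1 + 10 * s^+4 * w^+2 + 120 * s^+5 + 40 * s^+5 * w^+1 + 45 * s^+6 + 5 * s^+6 * w^+1 + 10 * s^+7 + 1 * s^+8)) by rewrite /=; ring.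
rewrite ltrDl; apply: lt_addpos; first apply: lt_addpos => //.
  exact: mulr_ge0.
by apply: mulr_ge0 => //; apply: exprn_ge0.
Qed.

Lemma Gpos5 (R : realFieldType) (s w : R) : 0 <= s -> 0 <= w ->
  1 < ((1+s)^+2 + w) * (1 + P 5 (2*(1+s)) ((1+s)^+2 + w) + ((1+s)^+2 + w)^+5).
Proof.
move=> hs hw.
have hw2 := exprn_ge0 2 hw; have hw3 := exprn_ge0 3 hw; have hw4 := exprn_ge0 4 hw; have hw5 := exprn_ge0 5 hw; have hw6 := exprn_ge0 6 hw; have hw7 := exprn_ge0 7 hw.
have hA : (0:R) < 3 + (-11) * w^+1 + 5 * w^+2 + 30 * w^+3 + 15 * w^+4 + 6 * w^+5 + 1 * w^+6 by have := (mulr_ge0 hw (sqr_ge0 (10*w-3))); have := (sqr_ge0 (460*w-137)); lra.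
have hB : (0:R) <= 28 + (-30) * w^+1 + 90 * w^+2 + 130 * w^+3 + 60 * w^+4 + 12 * w^+5 by have := (sqr_ge0 (6*w-1)); lra.
have hC : (0:R) <= 109 + 90 * w^+1 + 390 * w^+2 + 300 * w^+3 + 90 * w^+4 + 6 * w^+5 + 290 * s^+1 + 540 * s^+1 * w^+1 + 830 * s^+1 * w^+2 + 400 * s^+1 * w^+3 + 60 * s^+1 * w^+4 + 565 * s^+2 + 1170 * s^+2 * w^+1 + 1050 * s^+2 * w^+2 + 300 * s^+2 * w^+3 + 15 * s^+2 * w^+4 + 834 * s^+3 + 1494 * s^+3 * w^+1 + 840 * s^+3 * w^+2 + 120 * s^+3 * w^+3 + 938 * s^+4 + 1260 * s^+4 * w^+1 + 420 * s^+4 * w^+2 + 20 * s^+4 * w^+3 + 794 * s^+5 + 720 * s^+5 * w^+1 + 120 * s^+5 * w^+2 + 495 * s^+6 + 270 * s^+6 * w^+1 + 15 * s^+6 * w^+2 + 220 * s^+7 + 60 * s^+7 * w^+1 + 66 * s^+8 + 6 * s^+8 * w^+1 + 12 * s^+9 + 1 * s^+10 by pos_tac.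
have -> : ((1+s)^+2 + w) * (1 + P 5 (2*(1+s)) ((1+s)^+2 + w) + ((1+s)^+2 + w)^+5) =
  1 + ((3 + (-11) * w^+1 + 5 * w^+2 + 30 * w^+3 + 15 * w^+4 + 6 * w^+5 + 1 * w^+6) + s * (28 + (-30) * w^+1 + 90 * w^+2 + 130 * w^+3 + 60 * w^+4 + 12 * w^+5) + s^+2 * (109 + 90 * w^+1 + 390 * w^+2 + 300 * w^+3 + 90 * w^+4 + 6 * w^+5 + 290 * s^+1 + 540 * s^+1 * w^+1 + 830 * s^+1 * w^+2 + 400 * s^+1 * w^+3 + 60 * s^+1 * w^+4 + 565 * s^+2 + 1170 * s^+2 * w^+1 + 1050 * s^+2 * w^+2 + 300 * s^+2 * w^+3 + 15 * s^+2 * w^+4 + 834 * s^+3 + 1494 * s^+3 * w^+1 + 840 * s^+3 * w^+2 + 120 * s^+3 * w^+3 + 938 * s^+4 + 1260 * s^+4 * w^+1 + 420 * s^+4 * w^+2 + 20 * s^+4 * w^+3 + 794 * s^+5 + 720 * s^+5 * w^+1 + 120 * s^+5 * w^+2 + 495 * s^+6 + 270 * s^+6 * w^+1 + 15 * s^+6 * w^+2 + 220 * s^+7 + 60 * s^+7 * w^+1 + 66 * s^+8 + 6 * s^+8 * w^+1 + 12 * s^+9 + 1 * s^+10)) by rewrite /=; ring.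
rewrite ltrDl; apply: lt_addpos; first apply: lt_addpos => //.
  exact: mulr_ge0.
by apply: mulr_ge0 => //; apply: exprn_ge0.
Qed.

Lemma Gpos6 (R : realFieldType) (s w : R) : 0 <= s -> 0 <= w ->
  1 < ((1+s)^+2 + w) * (1 + P 6 (2*(1+s)) ((1+s)^+2 + w) + ((1+s)^+2 + w)^+6).
Proof.
move=> hs hw.
have hw2 := exprn_ge0 2 hw; have hw3 := exprn_ge0 3 hw; have hw4 := exprn_ge0 4 hw; have hw5 := exprn_ge0 5 hw; have hw6 := exprn_ge0 6 hw; have hw7 := exprn_ge0 7 hw.
have hA : (0:R) < 3 + (-20) * w^+1 + 21 * w^+2 + 63 * w^+3 + 33 * w^+4 + 21 * w^+5 + 7 * w^+6 + 1 * w^+7 by have := (mulr_ge0 hw (sqr_ge0 (4*w-1))); have := (sqr_ge0 (1680*w-383)); lra.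
have hB : (0:R) <= 32 + (-84) * w^+1 + 210 * w^+2 + 336 * w^+3 + 210 * w^+4 + 84 * w^+5 + 14 * w^+6 by have := (sqr_ge0 (5*w-1)); lra.
have hC : (0:R) <= 148 + 42 * w^+1 + 945 * w^+2 + 1008 * w^+3 + 525 * w^+4 + 126 * w^+5 + 7 * w^+6 + 476 * s^+1 + 980 * s^+1 * w^+1 + 2520 * s^+1 * w^+2 + 1960 * s^+1 * w^+3 + 700 * s^+1 * w^+4 + 84 * s^+1 * w^+5 + 1141 * s^+2 + 3045 * s^+2 * w^+1 + 4410 * s^+2 * w^+2 + 2450 * s^+2 * w^+3 + 525 * s^+2 * w^+4 + 21 * s^+2 * w^+5 + 2114 * s^+3 + 5376 * s^+3 * w^+1 + 5292 * s^+3 * w^+2 + 1960 * s^+3 * w^+3 + 210 * s^+3 * w^+4 + 3059 * s^+4 + 6440 * s^+4 * w^+1 + 4410 * s^+4 * w^+2 + 980 * s^+4 * w^+3 + 35 * s^+4 * w^+4 + 3448 * s^+5 + 5544 * s^+5 * w^+1 + 2520 * s^+5 * w^+2 + 280 * s^+5 * w^+3 + 3005 * s^+6 + 3465 * s^+6 * w^+1 + 945 * s^+6 * w^+2 + 35 * s^+6 * w^+3 + 2002 * s^+7 + 1540 * s^+7 * w^+1 + 210 * s^+7 * w^+2 + 1001 * s^+8 + 462 * s^+8 * w^+1 + 21 * s^+8 * w^+2 + 364 * s^+9 + 84 * s^+9 * w^+1 + 91 * s^+10 + 7 * s^+10 * w^+1 + 14 * s^+11 + 1 * s^+12 by pos_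tac.
have -> : ((1+s)^+2 + w) * (1 + P 6 (2*(1+s)) ((1+s)^+2 + w) + ((1+s)^+2 + w)^+6) =
  1 + ((3 + (-20) * w^+1 + 21 * w^+2 + 63 * w^+3 + 33 * w^+4 + 21 * w^+5 + 7 * w^+6 + 1 * w^+7) + s * (32 + (-84) * w^+1 + 210 * w^+2 + 336 * w^+3 + 210 * w^+4 + 84 * w^+5 + 14 * w^+6) + s^+2 * (148 + 42 * w^+1 + 945 * w^+2 + 1008 * w^+3 + 525 * w^+4 + 126 * w^+5 + 7 * w^+6 + 476 * s^+1 + 980 * s^+1 * w^+1 + 2520 * s^+1 * w^+2 + 1960 * s^+1 * w^+3 + 700 * s^+1 * w^+4 + 84 * s^+1 * w^+5 + 1141 * s^+2 + 3045 * s^+2 * w^+1 + 4410 * s^+2 * w^+2 + 2450 * s^+2 * w^+3 + 525 * s^+2 * w^+4 + 21 * s^+2 * w^+5 + 2114 * s^+3 + 5376 * s^+3 * w^+1 + 5292 * s^+3 * w^+2 + 1960 * s^+3 * w^+3 + 210 * s^+3 * w^+4 + 3059 * s^+4 + 6440 * s^+4 * w^+1 + 4410 * s^+4 * w^+2 + 980 * s^+4 * w^+3 + 35 * s^+4 * w^+4 + 3448 * s^+5 + 5544 * s^+5 * w^+1 + 2520 * s^+5 * w^+2 + 280 * s^+5 * w^+3 + 3005 * s^+6 + 3465 * s^+6 * w^+1 + 945 * s^+6 * w^+2 + 35 * s^+6 * w^+3 + 2002 * s^+7 + 1540 * s^+7 * w^+1 + 210 * s^+7 * w^+2 + 1001 *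 s^+8 + 462 * s^+8 * w^+1 + 21 * s^+8 * w^+2 + 364 * s^+9 + 84 * s^+9 * w^+1 + 91 * s^+10 + 7 * s^+10 * w^+1 + 14 * s^+11 + 1 * s^+12)) by rewrite /=; ring.
rewrite ltrDl; apply: lt_addpos; first apply: lt_addpos => //.
  exact: mulr_ge0.
by apply: mulr_ge0 => //; apply: exprn_ge0.
Qed.


Lemma indep_Kab a b (S : {set 'I_a + 'I_b}) :
  independent (Kab_rel a b) S =
  (S \subset (inl @: [set: 'I_a])) || (S \subset (inr @: [set: 'I_b])).
Proof.
apply/idP/idP.
- move=> /forallP H.
  case: (boolP (S \subset _)) => //= /subsetPn [y yS ynL].
  apply/subsetP => x xS.
  case: y yS ynL => [i|j] yS ynL; first by rewrite imset_f in ynL.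
  case: x xS => [i'|j'] xS; last by rewrite imset_f.
  have := H (inl i'); rewrite xS /= => /forallP /(_ (inr j)).
  by rewrite yS.
- case/orP => /subsetP sub; apply/forallP => x; apply/implyP => xS;
  apply/forallP => y; apply/implyP => yS;
  by case/imsetP: (sub x xS) => i _ ->; case/imsetP: (sub y yS) => j _ ->.
Qed.

Lemma count_Kab a b k :
  indep_count (Kab_rel a b) k = ('C(a, k) + 'C(b, k) - 'C(0, k))%N.
Proof.
rewrite /indep_count.
set L := (inl @: [set: 'I_a] : {set 'I_a + 'I_b}); set Rs := (inr @: [set: 'I_b] : {set 'I_a + 'I_b}).
have -> : [set S : {set 'I_a + 'I_b} | independent (Kab_rel a b) S & #|S| == k] =
   [set S : {set 'I_a + 'I_b} | S \subset L & #|S| == k] :|: [set S : {set 'I_a + 'I_b} | S \subset Rs & #|S| == k].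
  by apply/setP => S; rewrite !inE indep_Kab andb_orl.
rewrite cardsU.
have -> : [set S : {set 'I_a + 'I_b} | S \subset L & #|S| == k] :&: [set S : {set 'I_a + 'I_b} | S \subset Rs & #|S| == k]
   = [set S : {set 'I_a + 'I_b} | S \subset L :&: Rs & #|S| == k].
  apply/setP => S; rewrite !inE subsetI.
  by case: (S \subset L); case: (S \subset Rs); case: (#|S| == k).
have -> : L :&: Rs = set0.
  apply/setP => x; rewrite !inE; apply/negbTE/andP => -[/imsetP [i _ ->]].
  by case/imsetP.
rewrite !cards_draws cards0.
have -> : #|L| = a by rewrite card_imset ?cardsT ?card_ord // => x y [].
have -> : #|Rs| = b by rewrite card_imset ?cardsT ?card_ord // => x y [].
by [].
Qed.

Lemma sum_binom (n N : nat) (z : algC) : (n <= N)%N ->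
  \sum_(i < N.+1) 'C(n, i)%:R * z ^+ i = (z + 1) ^+ n.
Proof.
move=> le; rewrite exprD1n (big_ord_widen N.+1 (fun i => z ^+ i *+ 'C(n, i))) //.
rewrite [RHS]big_mkcond /=; apply: eq_bigr => i _.
case: ltnP => h; first by rewrite mulr_natl.
by rewrite bin_small // mul0r.
Qed.

Lemma eval_Kab a b (z : algC) :
  (indep_poly (Kab_rel a b)).[z] = (z + 1) ^+ a + (z + 1) ^+ b - 1.
Proof.
rewrite /indep_poly horner_sum.
rewrite card_sum !card_ord.
have E (i : nat) : ('C(a,i) + 'C(b,i) - 'C(0,i))%N%:R * z^+i =
   'C(a,i)%:R * z^+i + 'C(b,i)%:R * z^+i - 'C(0,i)%:R * z^+i.
  rewrite natrB ?natrD ?mulrBl ?mulrDl //.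
  by case: i => [|j]; [rewrite !bin0 | rewrite bin0n].
under eq_bigr => i _ do rewrite hornerZ hornerXn count_Kab E.
rewrite sumrB big_split /= !sum_binom ?leq_addr ?leq_addl //.
Qed.


Lemma Re_add1 (z : algC) : 'Re (z + 1) = 'Re z + 1.
Proof. rewrite !ReE rmorphD rmorph1 /=. by field. Qed.

Lemma stable_Kab a b :
  (forall y : algC, 1 < 'Re y -> y ^+ a + y ^+ b != 1) -> stable (Kab_rel a b).
Proof.
move=> H z /rootP; rewrite eval_Kab => /eqP; rewrite subr_eq0 => E.
rewrite real_leNgt ?Creal_Re ?real0 //; apply/negP => hz.
apply: (negP (H (z + 1) _)) E.
by rewrite Re_add1 ltrDr.
Qed.

Lemma P_SS (R : pzRingType) k (t q : R) : P k.+2 t q = t * P k.+1 t q - q * P k t q.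
Proof. by []. Qed.

Lemma P_sum (R : comPzRingType) (x1 x2 : R) k :
  x1 ^+ k + x2 ^+ k = P k (x1 + x2) (x1 * x2).
Proof.
suff : (x1 ^+ k + x2 ^+ k = P k (x1 + x2) (x1 * x2)) /\
       (x1 ^+ k.+1 + x2 ^+ k.+1 = P k.+1 (x1 + x2) (x1 * x2)) by case.
elim: k => [|k [IH1 IH2]]; first by split => //=; rewrite !expr0 ?expr1.
split => //. rewrite P_SS -IH1 -IH2 !exprS; ring.
Qed.

Lemma P_morph (R S : pzRingType) (f : {rmorphism R -> S}) k t q :
  f (P k t q) = P k (f t) (f q).
Proof.
suff : (f (P k t q) = P k (f t) (f q)) /\ (f (P k.+1 t q) = P k.+1 (f t) (f q)) by case.
elim: k => [|k [IH1 IH2]]; first by split => //=; rewrite rmorph_nat.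
split => //. by rewrite !P_SS rmorphB !rmorphM IH1 IH2.
Qed.

Definition GG (R : pzRingType) k (s w : R) :=
  ((1+s)^+2 + w) * (1 + P k (2*(1+s)) ((1+s)^+2 + w) + ((1+s)^+2 + w)^+k).

Lemma GG_morph (R S : pzRingType) (f : {rmorphism R -> S}) k s w :
  f (GG k s w) = GG k (f s) (f w).
Proof.
by rewrite /GG !(rmorphM, rmorphD, rmorphXn, rmorph1, P_morph, rmorph_nat).
Qed.

Lemma Gpos_le6 (R : realFieldType) k (s w : R) : (k <= 6)%N -> 0 <= s -> 0 <= w ->
  1 < GG k s w.
Proof.
move=> hk hs hw; rewrite /GG.
case: k hk => [|[|[|[|[|[|[|//]]]]]]] _.
- exact: Gpos0. - exact: Gpos1. - exact: Gpos2. - exact: Gpos3.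
- exact: Gpos4. - exact: Gpos5. - exact: Gpos6.
Qed.

Lemma GG_norm (y : algC) k :
  GG k ('Re y - 1) ('Im y ^+ 2) = `|y| ^+ 2 * `|1 + y ^+ k| ^+ 2.
Proof.
rewrite /GG; have -> : 1 + ('Re y - 1) = 'Re y by rewrite addrC subrK.
rewrite -normC2_Re_Im.
have -> : 2 * 'Re y = y + y^* by rewrite ReE; field.
rewrite !normCK -P_sum rmorphD rmorph1 rmorphXn /=.
have -> : y * y^* = `|y| ^+ 2 by rewrite normCK.
rewrite normCK exprMn; set c := y^*; set a := y ^+ k; set b := c ^+ k; ring.
Qed.

Lemma key_i (y : algC) k m : (k <= 6)%N -> (1 <= m)%N -> 1 < 'Re y ->
  y ^+ m + y ^+ (m + k) != 1.
Proof.
move=> hk hm hy; apply/eqP => E.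
have E2 : `|y| ^+ m * `|1 + y ^+ k| = 1.
  by rewrite -normrX -normrM mulrDr mulr1 -exprD E normr1.
pose s := in_algR (rpredB (Creal_Re y) (rpred1 _)).
pose w := in_algR (Creal_Im y) ^+ 2.
have hs : 0 <= s.
  have -> : (0 <= s) = (0 <= 'Re y - 1) by [].
  by rewrite subr_ge0 ltW.
have hw : 0 <= w by apply: sqr_ge0.
have G := Gpos_le6 hk hs hw.
have G2 : 1 < `|y| ^+ 2 * `|1 + y ^+ k| ^+ 2.
  have : (1 < GG k s w) = (1 < algRval (GG k s w)) by [].
  rewrite G GG_morph rmorphXn /= GG_norm; by move/esym.
have hX : 1 < `|y| * `|1 + y ^+ k|.
  rewrite real_ltNge ?realM ?normr_real ?real1 //; apply/negP => hle.
  have := exprn_ile1 2 (mulr_ge0 (normr_ge0 _) (normr_ge0 _)) hle.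
  by rewrite exprMn => /(lt_le_trans G2); rewrite ltxx.
have hr : 1 <= `|y| by apply: (le_trans (ltW hy)); exact: (leif_Re_Creal y).1.
have hm' : `|y| <= `|y| ^+ m by apply: ler_eXnr.
have : `|y| * `|1 + y ^+ k| <= `|y| ^+ m * `|1 + y ^+ k|.
  by apply: ler_wpM2r => //; apply: normr_ge0.
by rewrite E2 => /(lt_le_trans hX); rewrite ltxx.
Qed.


Lemma bern (R : realFieldType) (x : R) n : 0 <= x -> 1 + n%:R * x <= (1 + x) ^+ n.
Proof.
move=> hx; elim: n => [|n IH]; first by rewrite mul0r addr0 expr0.
rewrite exprS -natr1 mulrDl mul1r.
have h1 : 0 <= (1 + x) ^+ n by apply: exprn_ge0; lra.
have h2 : 0 <= n%:R * x by apply: mulr_ge0.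
have h3 : 0 <= x * (n%:R * x) by apply: mulr_ge0.
nra.
Qed.

Lemma real_ii (R : realFieldType) (K mm r u d D A rk : R) :
  1 <= K -> 4 * K ^+ 4 < mm -> 1 < u -> u <= r -> 0 <= d ->
  d ^+ 2 = 2 * r * (r - u) -> D * r <= K * rk * d -> 1 + rk - D <= A ->
  rk - 1 <= A -> r <= rk -> 1 < (1 + mm * (r - 1)) * A.
Proof.
move=> hK hm hu hur hd hd2 hD hA1 hA2 hrk.
have he : 0 < r - 1 by lra.
have hmm : 0 < mm by have := exprn_ge0 4 (le_trans ler01 hK); lra.
have hme : 0 < mm * (r - 1) by apply: mulr_gt0.
have hA0 : r - 1 <= A by lra.
case: (lerP (2 * K ^+ 2 * (r - 1)) 1) => hc.
- have hK2 : 1 <= K ^+ 2 by apply: exprn_ege1.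
  have hd2' : K ^+ 2 * d ^+ 2 < r ^+ 2.
    rewrite hd2.
    have h1 : K ^+ 2 * (2 * r * (r - u)) < K ^+ 2 * (2 * r * (r - 1)).
      by rewrite ltr_pM2l ?(lt_le_trans ltr01) // ltr_pM2l ?mulr_gt0 //; lra.
    apply: (lt_le_trans h1).
    have -> : K ^+ 2 * (2 * r * (r - 1)) = r * (2 * K ^+ 2 * (r - 1)) by ring.
    rewrite expr2; apply: ler_wpM2l; lra.
  have hKd : K * d < r.
    rewrite -(ltr_pXn2r (_ : (0 < 2)%N)) ?exprMn // ?nnegrE ?mulr_ge0 //; lra.
  have hD' : D <= rk.
    have h1 : D * r <= rk * r.
      apply: (le_trans hD).
      have -> : K * rk * d = rk * (K * d) by ring.
      apply: ler_wpM2l; [lra | exact: ltW].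
    by rewrite -(ler_pM2r (_ : 0 < r)) //; lra.
  have hA : 1 <= A by lra.
  have : 1 + mm * (r - 1) <= (1 + mm * (r - 1)) * A.
    by rewrite -{1}[1 + _]mulr1 ler_wpM2l //; lra.
  lra.
- have hK0 : 0 < K ^+ 2 by apply: exprn_gt0; lra.
  have h1 : 1 < (2 * K ^+ 2 * (r - 1)) ^+ 2.
    rewrite -[1](expr1n _ 2); rewrite ltr_pXn2r // ?nnegrE //; [lra|].
    apply: mulr_ge0; [apply: mulr_ge0 => //; lra | lra].
  have h2 : (2 * K ^+ 2 * (r - 1)) ^+ 2 = 4 * K ^+ 4 * (r - 1) ^+ 2.
    by ring.
  have h3 : 4 * K ^+ 4 * (r - 1) ^+ 2 <= mm * (r - 1) ^+ 2.
    by rewrite ler_pM2r ?exprn_gt0 //; lra.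
  have h4 : mm * (r - 1) ^+ 2 <= (1 + mm * (r - 1)) * A.
    have : mm * (r - 1) * (r - 1) <= (1 + mm * (r - 1)) * A.
      apply: ler_pM => //; [lra | lra | lra].
    by rewrite -mulrA -expr2.
  lra.
Qed.

Lemma pow_diff (y : algC) j :
  `|y ^+ j - `|y| ^+ j| * `|y| <= j%:R * `|y| ^+ j * `|y - `|y| |.
Proof.
set r := `|y|.
have hr : 0 <= r by apply: normr_ge0.
elim: j => [|j IH]; first by rewrite !expr0 subrr normr0 !mul0r.
have E : y ^+ j.+1 - r ^+ j.+1 = y * (y ^+ j - r ^+ j) + r ^+ j * (y - r).
  rewrite !exprS; set a := y ^+ j; set b := r ^+ j; ring.
have h1 : `|y ^+ j.+1 - r ^+ j.+1| <= r * `|y ^+ j - r ^+ j| + r ^+ j * `|y - r|.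
  rewrite E; apply: (le_trans (ler_normD _ _)).
  by rewrite !normrM normrX normr_id.
have h2 := ler_wpM2r hr h1.
apply: (le_trans h2); rewrite mulrDl.
have h3 : r * `|y ^+ j - r ^+ j| * r <= r * (j%:R * r ^+ j * `|y - r|).
  by rewrite -mulrA; apply: ler_wpM2l.
apply: (le_trans (lerD h3 (lexx _))).
rewrite -natr1 exprS; set b := r ^+ j; set d := `|y - r|; set n := j%:R.
rewrite le_eqVlt; apply/orP; left; apply/eqP; ring.
Qed.

Lemma key_ii (y : algC) k m : (1 <= k)%N -> (4 * k ^ 4 < m)%N -> 1 < 'Re y ->
  y ^+ m + y ^+ (m + k) != 1.
Proof.
move=> hk hm hy; apply/eqP => E.
have E2 : `|y| ^+ m * `|1 + y ^+ k| = 1.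
  by rewrite -normrX -normrM mulrDr mulr1 -exprD E normr1.
have hur : 'Re y <= `|y| by exact: (leif_Re_Creal y).1.
have hd2 : `|y - `|y| | ^+ 2 = 2 * `|y| * (`|y| - 'Re y).
  rewrite normCK rmorphB /= (conj_Creal (normr_real y)).
  have hyc : y * y^* = `|y| ^+ 2 by rewrite normCK.
  have hre : y + y^* = 2 * 'Re y by rewrite ReE; field.
  have -> : (y - `|y|) * (y^* - `|y|) = y * y^* - `|y| * (y + y^*) + `|y| ^+ 2.
    set c := y^*; set r := `|y|; ring.
  rewrite hyc hre; set r := `|y|; set u := 'Re y; ring.
have hD := pow_diff y k.
have hA1 : 1 + `|y| ^+ k - `|y ^+ k - `|y| ^+ k| <= `|1 + y ^+ k|.
  have := lerB_normD (1 + `|y| ^+ k) (y ^+ k - `|y| ^+ k).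
  have -> : 1 + `|y| ^+ k + (y ^+ k - `|y| ^+ k) = 1 + y ^+ k.
    set a := `|y| ^+ k; set b := y ^+ k; ring.
  by rewrite ger0_norm // addr_ge0 // exprn_ge0.
have hA2 : `|y| ^+ k - 1 <= `|1 + y ^+ k|.
  by have := lerB_normD (y ^+ k) 1; rewrite normr1 normrX (addrC (y ^+ k)).
pose r' := in_algR (normr_real y).
pose u' := in_algR (Creal_Re y).
pose d' := in_algR (normr_real (y - `|y|)).
pose D' := in_algR (normr_real (y ^+ k - `|y| ^+ k)).
pose A' := in_algR (normr_real (1 + y ^+ k)).
have := @real_ii _ k%:R m%:R r' u' d' D' A' (r' ^+ k).
have Vle (x z : algR) : (x <= z) = (algRval x <= algRval z) by [].
have Vlt (x z : algR) : (x < z) = (algRval x < algRval z) by [].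
have hr1 : 1 <= `|y| by apply: (le_trans (ltW hy)).
rewrite !Vle !Vlt !(rmorphXn, rmorphM, rmorphB, rmorphD, rmorph1, rmorph_nat) /=.
move=> H.
have H' : 1 < (1 + m%:R * (`|y| - 1)) * `|1 + y ^+ k|.
  apply: H => //.
  - by rewrite ler1n.
  - have h4 : ((4 * k ^ 4)%N%:R < m%:R :> algC) by rewrite ltr_nat.
    rewrite natrM natrX in h4. exact: h4.
  - by apply: val_inj => /=; rewrite -expr2 hd2.
  - by apply: ler_eXnr.
have B : 1 + m%:R * (r' - 1) <= r' ^+ m.
  have := @bern _ (r' - 1) m.
  have -> : 1 + (r' - 1) = r' by rewrite addrC subrK.
  apply; rewrite subr_ge0; exact: hr1.
move: B; rewrite Vle !(rmorphXn, rmorphM, rmorphB, rmorphD, rmorph1, rmorph_nat) /= => B.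
have : (1 + m%:R * (`|y| - 1)) * `|1 + y ^+ k| <= `|y| ^+ m * `|1 + y ^+ k|.
  by apply: ler_wpM2r => //; apply: normr_ge0.
by rewrite E2 => /(lt_le_trans H'); rewrite ltxx.
Qed.


Local Close Scope ring_scope.

Theorem theorem3 (k : nat) :
  ((k <= 6)%N -> forall m : nat, (1 <= m)%N -> stable (Kab_rel m (m + k))) /\
  ((7 <= k)%N -> exists N : nat, forall m : nat, (N < m)%N ->
       stable (Kab_rel m (m + k))).
Proof.
split.
- move=> hk m hm; apply: stable_Kab => y hy; exact: key_i.
- move=> hk; exists (4 * k ^ 4)%N => m hm; apply: stable_Kab => y hy.
  by apply: key_ii => //; apply: leq_trans hk.
Qed.
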